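(* Let $\sigma>0$, $\eta>0$, $\hat{\alpha}>0$, $h>0$, $r\ge 0$ and $a\in\mathbb{R}$ be constants. Then there exist a constant $\beta^*>0$ and a function $v\in C^1[0,\infty)$ such that $$\beta^* = -\frac{\hat{\alpha}}{4}v(y)^2 + \frac{1}{2}\sigma^2 v'(y) - \eta y\, v(y) + a\, v(y) + h y \quad \text{for all } y\ge 0,$$ $v(0)=-r$, $v$ is nondecreasing on $[0,\infty)$, and $\lim_{y\to\infty} v(y) = h/\eta$.
   Context: This is the (differentiated) Bellman equation of a one-dimensional drift-rate control problem: $\sigma^2$ is the variance and $a$ the drift of a Brownian motion, $\eta$ a mean-reversion rate, $\hat{\alpha}$ a quadratic control-cost parameter (control cost $x^2/\hat{\alpha}$), $h$ a holding-cost rate and $r$ a reflection (idleness) cost rate. *)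

(* Defs.v *)
From Stdlib Require Import Reals.
From Coquelicot Require Import Coquelicot.
Open Scope R_scope.

Definition C1_nonneg (v dv : R -> R) : Prop :=
  (forall y, 0 < y -> is_derive v y (dv y)) /\
  filterlim (fun t => (v t - v 0) / t) (at_right 0) (locally (dv 0)) /\
  (forall y, 0 < y -> continuous dv y) /\
  filterlim dv (at_right 0) (locally (dv 0)).

(* Main.v *)
Require Import Defs.
From Stdlib Require Import Reals Lra Lia Arith.
From Coquelicot Require Import Coquelicot.
Open Scope R_scope.

Lemma cont_pos (f : R -> R) x : continuity_pt f x -> 0 < f x ->
  exists d, 0 < d /\ forall y, Rabs (y - x) < d -> 0 < f y.
Proof.
  intros Hc Hp.
  destruct (Hc (f x / 2)) as [d [Hd H]]; [lra|].
  exists d; split; [lra|]. intros y Hy.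
  destruct (Req_dec y x) as [->|Hne]; [lra|].
  assert (HH : dist R_met (f y) (f x) < f x / 2).
  { apply H. split; [split; [exact I| auto]|]. simpl. unfold R_dist. exact Hy. }
  simpl in HH. unfold R_dist in HH.
  apply Rabs_def2 in HH. lra.
Qed.

Lemma cont_neg (f : R -> R) x : continuity_pt f x -> f x < 0 ->
  exists d, 0 < d /\ forall y, Rabs (y - x) < d -> f y < 0.
Proof.
  intros Hc Hp.
  destruct (cont_pos (fun y => - f y) x) as [d [Hd H]].
  - apply continuity_pt_opp; auto.
  - lra.
  - exists d; split; auto. intros y Hy. specialize (H y Hy). lra.
Qed.

Lemma first_zero (f : R -> R) a b : a <= b ->
  (forall x, a <= x <= b -> continuity_pt f x) -> 0 < f a -> f b <= 0 ->
  exists p, a < p <= b /\ f p = 0 /\ (forall x, a <= x < p -> 0 < f x).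
Proof.
  intros Hab Hc Ha Hb.
  set (U := fun x => a <= x <= b /\ forall y, a <= y <= x -> 0 < f y).
  assert (Hbd : bound U) by (exists b; intros x [Hx _]; lra).
  assert (Hne : exists x, U x).
  { exists a. split; [lra|]. intros y Hy. replace y with a by lra. auto. }
  destruct (completeness U Hbd Hne) as [p [Hub Hlub]].
  assert (Hap : a <= p) by (apply Hub; destruct Hne as [x Hx]; split; [lra|];
    intros y Hy; replace y with a by lra; auto).
  assert (Hpb : p <= b) by (apply Hlub; intros x [Hx _]; lra).
  assert (Hbelow : forall x, a <= x < p -> 0 < f x).
  { intros x Hx. destruct (Rle_lt_dec p x) as [H|H]; [lra|].
    destruct (Classical_Prop.classic (exists z, U z /\ x <= z)) as [[z [[Hz1 Hz2] Hz3]]|Hn].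
    - apply Hz2; lra.
    - exfalso. assert (p <= x); [|lra]. apply Hlub. intros z Hz.
      destruct (Rle_lt_dec z x); auto. exfalso; apply Hn; exists z; split; auto; lra. }
  destruct (Rtotal_order (f p) 0) as [Hneg|[Hz|Hpos]].
  - exfalso. destruct (cont_neg f p (Hc p (conj Hap Hpb)) Hneg) as [d [Hd H]].
    destruct (Req_dec p a) as [->|Hpa]; [lra|].
    set (y := Rmax a (p - d/2)).
    assert (Hy1 : a <= y < p) by (unfold y, Rmax; destruct Rle_dec; lra).
    specialize (Hbelow y Hy1). assert (f y < 0); [|lra].
    apply H. unfold y, Rmax; destruct Rle_dec; rewrite Rabs_left; lra.
  - exists p. repeat split; auto.
    destruct (Req_dec p a) as [->|]; lra.
  - exfalso. destruct (cont_pos f p (Hc p (conj Hap Hpb)) Hpos) as [d [Hd H]].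
    destruct (Req_dec p b) as [->|Hpb']; [lra|].
    set (y := Rmin b (p + d/2)).
    assert (Hy1 : p < y <= b) by (unfold y, Rmin; destruct Rle_dec; lra).
    assert (U y).
    { split; [lra|]. intros z Hz. destruct (Rlt_le_dec z p).
      - apply Hbelow; lra.
      - apply H. unfold y, Rmin in Hy1, Hz. destruct Rle_dec; rewrite Rabs_right; lra. }
    specialize (Hub y H0). lra.
Qed.

Lemma deriv_left_zero (f : R -> R) a p l : is_derive f p l -> a < p -> f p = 0 ->
  (forall x, a <= x < p -> 0 < f x) -> l <= 0.
Proof.
  intros Hd Hap Hp Hpos. apply is_derive_Reals in Hd.
  destruct (Rle_lt_dec l 0) as [H|H]; auto. exfalso.
  destruct (Hd (l/2)) as [d Hdl]; [lra|].
  set (h := - Rmin (d/2) ((p - a)/2)).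
  assert (Hh : - d < h < 0 /\ a <= p + h) by
   (pose proof (cond_pos d); unfold h, Rmin; destruct Rle_dec; lra).
  assert (Hx := Hdl h ltac:(lra) ltac:(rewrite Rabs_left; lra)).
  rewrite Hp in Hx. apply Rabs_def2 in Hx.
  assert (0 < f (p + h)) by (apply Hpos; lra).
  assert ((f (p + h) - 0) / h < 0).
  { unfold Rdiv. rewrite Rminus_0_r. apply Rmult_pos_neg; auto. apply Rinv_lt_0_compat; lra. }
  lra.
Qed.

Lemma deriv_pos_right (f : R -> R) p l : is_derive f p l -> 0 < l -> f p = 0 ->
  exists d, 0 < d /\ forall x, p < x < p + d -> 0 < f x.
Proof.
  intros Hd Hl Hp. apply is_derive_Reals in Hd.
  destruct (Hd (l/2)) as [d Hdl]; [lra|].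
  exists d; split; [apply cond_pos|]. intros x Hx.
  assert (Hx' := Hdl (x - p) ltac:(lra) ltac:(rewrite Rabs_right; lra)).
  replace (p + (x - p)) with x in Hx' by ring. rewrite Hp in Hx'.
  apply Rabs_def2 in Hx'. rewrite Rminus_0_r in Hx'.
  assert (0 < f x / (x - p)) by lra.
  replace (f x) with (f x / (x - p) * (x - p)) by (field; lra).
  apply Rmult_lt_0_compat; lra.
Qed.

Lemma mono_lb (f df : R -> R) a b m : a <= b ->
  (forall x, a <= x <= b -> is_derive f x (df x)) ->
  (forall x, a <= x <= b -> m <= df x) -> f a + m * (b - a) <= f b.
Proof.
  intros Hab Hd Hm.
  destruct (MVT_gen f a b df) as [c [Hc Heq]].
  - intros x Hx. rewrite Rmin_left in Hx by lra. rewrite Rmax_right in Hx by lra. apply Hd; lra.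
  - intros x Hx. rewrite Rmin_left in Hx by lra. rewrite Rmax_right in Hx by lra.
    apply derivable_continuous_pt. exists (df x). apply is_derive_Reals. apply Hd; lra.
  - rewrite Rmin_left in Hc by lra. rewrite Rmax_right in Hc by lra.
    assert (m * (b - a) <= df c * (b - a)) by (apply Rmult_le_compat_r; [lra| apply Hm; lra]).
    lra.
Qed.

Lemma mono_ub (f df : R -> R) a b m : a <= b ->
  (forall x, a <= x <= b -> is_derive f x (df x)) ->
  (forall x, a <= x <= b -> df x <= m) -> f b <= f a + m * (b - a).
Proof.
  intros Hab Hd Hm.
  assert (H := mono_lb (fun x => - f x) (fun x => - df x) a b (-m) Hab).
  assert (- f a + - m * (b - a) <= - f b); [|lra].
  apply H.
  - intros x Hx. apply (is_derive_opp f x (df x)). auto.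
  - intros x Hx. specialize (Hm x Hx). lra.
Qed.

Lemma min_deriv_zero (f : R -> R) p l e : is_derive f p l -> f p = 0 -> 0 < e ->
  (forall x, Rabs (x - p) < e -> 0 <= f x) -> l = 0.
Proof.
  intros Hd Hp He Hpos. apply is_derive_Reals in Hd.
  destruct (Rtotal_order l 0) as [Hl|[Hl|Hl]]; auto; exfalso.
  - destruct (Hd (-l/2)) as [d Hdl]; [lra|].
    set (h := Rmin (d/2) (e/2)).
    assert (Hh : 0 < h < d /\ h < e) by (pose proof (cond_pos d); unfold h, Rmin; destruct Rle_dec; lra).
    assert (Hx := Hdl h ltac:(lra) ltac:(rewrite Rabs_right; lra)).
    rewrite Hp, Rminus_0_r in Hx. apply Rabs_def2 in Hx.
    assert (0 <= f (p + h)) by (apply Hpos; replace (p + h - p) with h by ring; rewrite Rabs_right; lra).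
    assert (0 <= f (p + h) / h) by (apply Rmult_le_pos; [lra| left; apply Rinv_0_lt_compat; lra]).
    lra.
  - destruct (Hd (l/2)) as [d Hdl]; [lra|].
    set (h := - Rmin (d/2) (e/2)).
    assert (Hh : -d < h < 0 /\ -e < h) by (pose proof (cond_pos d); unfold h, Rmin; destruct Rle_dec; lra).
    assert (Hx := Hdl h ltac:(lra) ltac:(rewrite Rabs_left; lra)).
    rewrite Hp, Rminus_0_r in Hx. apply Rabs_def2 in Hx.
    assert (0 <= f (p + h)) by (apply Hpos; replace (p + h - p) with h by ring; rewrite Rabs_left; lra).
    assert (/ h < 0) by (apply Rinv_lt_0_compat; lra).
    assert (f (p + h) / h <= 0) by (unfold Rdiv; nra). lra.
Qed.

Lemma deriv_cont (f : R -> R) x l : is_derive f x l -> continuity_pt f x.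
Proof. intros H. apply derivable_continuous_pt. exists l. apply is_derive_Reals. auto. Qed.

Lemma exp_mul_d (f df : R -> R) c x : is_derive f x (df x) ->
  is_derive (fun y => exp (c * y ^ 2) * f y) x (exp (c * x ^ 2) * (df x + 2 * c * x * f x)).
Proof.
  intros H.
  assert (He : is_derive (fun y => exp (c * y ^ 2)) x (exp (c * x ^ 2) * (2 * c * x))).
  { auto_derive; [auto| simpl; ring]. }
  assert (Hm := is_derive_mult _ _ x _ _ He H ltac:(intros; unfold mult; simpl; ring)).
  unfold mult, plus in Hm; simpl in Hm.
  replace (exp (c*x^2) * (df x + 2*c*x*f x)) with (exp (c * x ^ 2) * (2 * c * x) * f x + exp (c * x ^ 2) * df x) by ring.
  exact Hm.
Qed.

Fixpoint cp (b z0 T E : R) (n : nat) : R * R :=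
  match n with
  | O => (1, T)
  | S m => let q := cp b z0 T E m in
      (snd q, (b * z0 * (INR m + 1) * snd q + (b * INR m - E) * fst q)
              / ((INR m + 1) * (INR m + 2)))
  end.

Definition cc b z0 T E n := fst (cp b z0 T E n).

Lemma cc_rec b z0 T E n : cc b z0 T E (S (S n)) =
  (b * z0 * (INR n + 1) * cc b z0 T E (S n) + (b * INR n - E) * cc b z0 T E n)
  / ((INR n + 1) * (INR n + 2)).
Proof. reflexivity. Qed.

Lemma cc0 b z0 T E : cc b z0 T E 0 = 1. Proof. reflexivity. Qed.
Lemma cc1 b z0 T E : cc b z0 T E 1 = T. Proof. reflexivity. Qed.

Lemma sum_ge_term (d : nat -> R) N n : (forall i, 0 <= d i) -> (n <= N)%nat ->
  d n <= sum_f_R0 d N.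
Proof.
  intros Hd. induction N; intros Hn.
  - replace n with 0%nat by lia. simpl. lra.
  - simpl. destruct (Nat.eq_dec n (S N)) as [->|Hne]; [
     assert (0 <= sum_f_R0 d N) by (apply cond_pos_sum; auto); lra|].
    assert (d n <= sum_f_R0 d N) by (apply IHN; lia). specialize (Hd (S N)). lra.
Qed.

Lemma cc_step b z0 T E R n : 0 < b -> 0 < R ->
  2 * b * Rabs z0 * R + 2 * (b + Rabs E) * R ^ 2 <= INR n ->
  Rabs (cc b z0 T E (S (S n))) * R ^ (S (S n)) <=
  (Rabs (cc b z0 T E (S n)) * R ^ (S n) + Rabs (cc b z0 T E n) * R ^ n) / 2.
Proof.
  intros Hb HR HN.
  rewrite cc_rec.
  set (c1 := cc b z0 T E (S n)). set (c0 := cc b z0 T E n).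
  set (x := INR n).
  assert (Hx : 0 <= x) by apply pos_INR.
  set (P := R ^ n).
  assert (HP : 0 < P) by (apply pow_lt; lra).
  replace (R ^ S (S n)) with (P * R ^ 2) by (unfold P; simpl; ring).
  replace (R ^ S n) with (P * R) by (unfold P; simpl; ring).
  assert (Hden : 0 < (x + 1) * (x + 2)) by nra.
  rewrite Rabs_div by lra. rewrite (Rabs_pos_eq ((x+1)*(x+2))) by lra.
  assert (Hnum : Rabs (b * z0 * (x + 1) * c1 + (b * x - E) * c0) <=
     b * Rabs z0 * (x + 1) * Rabs c1 + (b * x + Rabs E) * Rabs c0).
  { eapply Rle_trans; [apply Rabs_triang|].
    rewrite !Rabs_mult. rewrite (Rabs_pos_eq b) by lra. rewrite (Rabs_pos_eq (x+1)) by lra.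
    apply Rplus_le_compat_l. apply Rmult_le_compat_r; [apply Rabs_pos|].
    unfold Rminus. eapply Rle_trans; [apply Rabs_triang|]. rewrite Rabs_Ropp.
    rewrite Rabs_pos_eq by nra. lra. }
  set (A := Rabs c1). set (B := Rabs c0).
  assert (HA : 0 <= A) by apply Rabs_pos. assert (HB : 0 <= B) by apply Rabs_pos.
  set (z := Rabs z0). set (e := Rabs E).
  assert (Hz : 0 <= z) by apply Rabs_pos. assert (He : 0 <= e) by apply Rabs_pos.
  apply Rle_trans with ((b * z * (x + 1) * A + (b * x + e) * B) / ((x + 1) * (x + 2)) * (P * R ^ 2)).
  { apply Rmult_le_compat_r; [nra|]. apply Rmult_le_compat_r; [left; apply Rinv_0_lt_compat; lra|]. exact Hnum. }
  assert (HR2 : 0 <= (b+e)*R^2) by (apply Rmult_le_pos; [lra| apply pow_le; lra]).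
  assert (HN2 : 2*b*z*R + 2*(b+e)*R^2 <= x) by exact HN.
  assert (HbzR : 0 <= b*z*R) by (apply Rmult_le_pos; [apply Rmult_le_pos|]; lra).
  assert (H1 : 2 * b * z * R <= x + 2) by (idtac; lra).
  assert (H2 : 2 * (b + e) * R ^ 2 <= x + 2) by lra.
  assert (K1 : b * z * (x + 1) * A * R ^ 2 <= (x + 1) * (x + 2) * (A * R) / 2).
  { simpl. assert (b * z * R * ((x+1) * A * R) <= (x+2)/2 * ((x+1) * A * R)).
    { apply Rmult_le_compat_r; [apply Rmult_le_pos; [apply Rmult_le_pos|]; lra|lra]. } nra. }
  assert (K2 : (b * x + e) * B * R ^ 2 <= (x + 1) * (x + 2) * B / 2).
  { assert (b * x + e <= (b + e) * (x + 1)) by nra.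
    assert ((b * x + e) * R^2 <= (b+e) * R^2 * (x+1)).
    { apply Rle_trans with ((b + e) * (x + 1) * R^2). apply Rmult_le_compat_r; [simpl; nra|lra]. lra. }
    assert ((b + e) * R^2 * (x+1) <= (x+2)/2 * (x+1)) by (apply Rmult_le_compat_r; lra).
    assert ((b * x + e) * R^2 * B <= (x+2)/2*(x+1) * B) by (apply Rmult_le_compat_r; lra).
    nra. }
  apply Rle_trans with (((x + 1) * (x + 2) * (A * R) / 2 + (x + 1) * (x + 2) * B / 2) / ((x + 1) * (x + 2)) * P).
  { replace ((b * z * (x + 1) * A + (b * x + e) * B) / ((x + 1) * (x + 2)) * (P * R ^ 2))
      with ((b * z * (x + 1) * A * R^2 + (b * x + e) * B * R^2) / ((x + 1) * (x + 2)) * P) by (field; lra).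
    apply Rmult_le_compat_r; [lra|]. apply Rmult_le_compat_r; [left; apply Rinv_0_lt_compat; lra|]. lra. }
  right. field. lra.
Qed.

Lemma cc_bound b z0 T E R : 0 < b -> 0 < R ->
  exists M, forall n, Rabs (cc b z0 T E n * R ^ n) <= M.
Proof.
  intros Hb HR.
  destruct (INR_unbounded (2 * b * Rabs z0 * R + 2 * (b + Rabs E) * R ^ 2)) as [N HN].
  set (d := fun n => Rabs (cc b z0 T E n) * R ^ n).
  assert (Hd : forall i, 0 <= d i) by (intros; unfold d; apply Rmult_le_pos; [apply Rabs_pos| apply pow_le; lra]).
  exists (sum_f_R0 d (S N)).
  assert (Heq : forall n, Rabs (cc b z0 T E n * R ^ n) = d n).
  { intros n. unfold d. rewrite Rabs_mult. rewrite (Rabs_pos_eq (R ^ n)); auto. apply pow_le; lra. }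
  intros n. rewrite Heq.
  induction n as [n IH] using (well_founded_induction Wf_nat.lt_wf).
  destruct (le_lt_dec n (S N)) as [Hn|Hn].
  - apply sum_ge_term; auto.
  - destruct n as [|[|m]]; try lia.
    eapply Rle_trans; [apply cc_step; auto|].
    + apply Rle_trans with (INR N); [lra|]. apply le_INR. lia.
    + fold (d (S m)). fold (d m).
      assert (d (S m) <= sum_f_R0 d (S N)) by (apply IH; lia).
      assert (d m <= sum_f_R0 d (S N)) by (apply IH; lia). lra.
Qed.

Lemma cc_rad b z0 T E y : 0 < b -> Rbar_lt (Rabs y) (CV_radius (cc b z0 T E)).
Proof.
  intros Hb. destruct (CV_radius_bounded (cc b z0 T E)) as [Hub _].
  assert (H : Rbar_le (Rabs y + 1) (CV_radius (cc b z0 T E))).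
  { apply Hub. apply cc_bound; auto. pose proof (Rabs_pos y); lra. }
  eapply Rbar_lt_le_trans; [|exact H]. simpl. lra.
Qed.

Definition phi b z0 T E x := PSeries (cc b z0 T E) (x - z0).
Definition phi1 b z0 T E x := PSeries (PS_derive (cc b z0 T E)) (x - z0).
Definition phi2 b z0 T E x := PSeries (PS_derive (PS_derive (cc b z0 T E))) (x - z0).

Lemma shift_derive (a : nat -> R) z0 x : Rbar_lt (Rabs (x - z0)) (CV_radius a) ->
  is_derive (fun x => PSeries a (x - z0)) x (PSeries (PS_derive a) (x - z0)).
Proof.
  intros H.
  assert (Hd := is_derive_PSeries a (x - z0) H).
  assert (Hg : is_derive (fun x : R => x - z0) x 1).
  { auto_derive; [auto| ring]. }
  assert (Hc := is_derive_comp (PSeries a) (fun x => x - z0) x _ _ Hd Hg).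
  replace (PSeries (PS_derive a) (x - z0)) with (scal 1 (PSeries (PS_derive a) (x - z0))); [exact Hc|]. unfold scal; simpl; unfold mult; simpl; ring.
Qed.

Lemma phi_d b z0 T E x : 0 < b -> is_derive (phi b z0 T E) x (phi1 b z0 T E x).
Proof. intros Hb. apply shift_derive. apply cc_rad; auto. Qed.

Lemma phi1_d b z0 T E x : 0 < b -> is_derive (phi1 b z0 T E) x (phi2 b z0 T E x).
Proof. intros Hb. apply shift_derive. rewrite CV_radius_derive. apply cc_rad; auto. Qed.

Lemma phi_0 b z0 T E : phi b z0 T E z0 = 1.
Proof. unfold phi. rewrite Rminus_diag, PSeries_0. reflexivity. Qed.

Lemma phi1_0 b z0 T E : phi1 b z0 T E z0 = T.
Proof. unfold phi1. rewrite Rminus_diag, PSeries_0. unfold PS_derive. rewrite cc1. simpl. ring. Qed.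

Lemma phi_eq b z0 T E x : 0 < b ->
  phi2 b z0 T E x = b * x * phi1 b z0 T E x - E * phi b z0 T E x.
Proof.
  intros Hb. unfold phi, phi1, phi2. set (y := x - z0). set (c := cc b z0 T E).
  assert (R0 : Rbar_lt (Rabs y) (CV_radius c)) by (apply cc_rad; auto).
  assert (R1 : Rbar_lt (Rabs y) (CV_radius (PS_derive c))) by (rewrite CV_radius_derive; auto).
  assert (H0 := PSeries_correct c y (CV_radius_inside _ _ R0)).
  assert (H1 := PSeries_correct _ y (CV_radius_inside _ _ R1)).
  assert (Ha := is_pseries_scal (b * z0) _ y _ ltac:(unfold mult; simpl; ring) H1).
  assert (Hb2 := is_pseries_scal b _ y _ ltac:(unfold mult; simpl; ring) (is_pseries_incr_1 _ _ _ H1)).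
  assert (Hc := is_pseries_scal (-E) _ y _ ltac:(unfold mult; simpl; ring) H0).
  assert (Hs := is_pseries_plus _ _ _ _ _ Ha (is_pseries_plus _ _ _ _ _ Hb2 Hc)).
  replace x with (z0 + y) by (unfold y; ring).
  replace (b * (z0 + y) * PSeries (PS_derive c) y - E * PSeries c y) with
    (plus (scal (b * z0) (PSeries (PS_derive c) y))
       (plus (scal b (scal y (PSeries (PS_derive c) y))) (scal (- E) (PSeries c y)))).
  2:{ unfold plus, scal; simpl; unfold mult; simpl. ring. }
  apply is_pseries_unique. eapply is_pseries_ext; [|exact Hs].
  intros n. unfold PS_plus, PS_scal, PS_incr_1, PS_derive, plus, scal, zero; simpl; unfold mult; simpl.
  unfold c. rewrite cc_rec.
  destruct n as [|m].
  - simpl. field.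
  - change (match m with 0%nat => 1 | S _ => INR m + 1 end) with (INR (S m)). rewrite !S_INR. field. pose proof (pos_INR m). lra.
Qed.

Section Main.
Variables b z0 T : R.
Hypothesis Hb : 0 < b.
Hypothesis HT : 0 < T.

Lemma isd_eq (f : R -> R) (x l l' : R) : is_derive f x l -> l = l' -> is_derive f x l'.
Proof. intros H ->; exact H. Qed.

Ltac fixd H := eapply isd_eq; [eapply is_derive_ext; [|exact H]; intros; simpl; try ring|]; simpl; try ring.

Definition F E := phi b z0 T E.
Definition F1 E := phi1 b z0 T E.

Lemma F_d E x : is_derive (F E) x (F1 E x).
Proof. apply phi_d; auto. Qed.
Lemma F1_d E x : is_derive (F1 E) x (b * x * F1 E x - E * F E x).
Proof. unfold F1, F. rewrite <- phi_eq by auto. apply phi1_d; auto. Qed.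
Lemma F_c E x : continuity_pt (F E) x.
Proof. eapply deriv_cont; apply F_d. Qed.
Lemma F1_c E x : continuity_pt (F1 E) x.
Proof. eapply deriv_cont; apply F1_d. Qed.
Lemma F_z0 E : F E z0 = 1.
Proof. apply phi_0. Qed.
Lemma F1_z0 E : F1 E z0 = T.
Proof. apply phi1_0. Qed.

Lemma energy_ineq x E u w M : Rabs x <= M ->
  - (1 + 2 * b * M + Rabs E) * (u ^ 2 + w ^ 2) <= 2 * u * w + 2 * w * (b * x * w - E * u) /\
  2 * u * w + 2 * w * (b * x * w - E * u) <= (1 + 2 * b * M + Rabs E) * (u ^ 2 + w ^ 2).
Proof.
  intros Hx. assert (Hx2 : - M <= x <= M) by (unfold Rabs in Hx; destruct Rcase_abs; lra). clear Hx.
  pose proof (pow2_ge_0 (u+w)). pose proof (pow2_ge_0 (u-w)).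
  assert (A1 : - (u^2 + w^2) <= 2 * u * w <= u^2 + w^2) by (split; nra).
  assert (A2 : - Rabs E * (u^2 + w^2) <= - 2 * E * u * w <= Rabs E * (u^2 + w^2)).
  { destruct (Rle_or_lt 0 E).
    - rewrite Rabs_pos_eq by lra.
      assert (0 <= E * (u+w)^2) by (apply Rmult_le_pos; lra).
      assert (0 <= E * (u-w)^2) by (apply Rmult_le_pos; lra). split; nra.
    - rewrite Rabs_left by lra.
      assert (0 <= -E * (u+w)^2) by (apply Rmult_le_pos; lra).
      assert (0 <= -E * (u-w)^2) by (apply Rmult_le_pos; lra). split; nra. }
  assert (A3 : - 2 * b * M * w^2 <= 2 * b * x * w^2 <= 2 * b * M * w^2).
  { pose proof (pow2_ge_0 w).
    assert (0 <= b * w^2 * (M - x)) by (apply Rmult_le_pos; [apply Rmult_le_pos|]; lra).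
    assert (0 <= b * w^2 * (M + x)) by (apply Rmult_le_pos; [apply Rmult_le_pos|]; lra).
    split; nra. }
  assert (0 <= u^2) by nra. assert (0 <= w^2) by nra.
  assert (0 <= b * M * u^2) by (assert (0 <= M) by lra; apply Rmult_le_pos; [nra|lra]).
  split; nra.
Qed.

Lemma no_double_zero E z : z0 <= z -> F E z = 0 -> F1 E z = 0 -> False.
Proof.
  intros Hz H0 H1.
  set (M := Rabs z0 + Rabs z).
  set (C := 1 + 2 * b * M + Rabs E).
  set (w := fun x => F E x ^ 2 + F1 E x ^ 2).
  set (H := fun x => exp (C * x) * w x).
  assert (Hd : forall x, is_derive H x (exp (C * x) * (C * w x + (2 * F E x * F1 E x + 2 * F1 E x * (b * x * F1 E x - E * F E x))))).
  { intros x. unfold H, w.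
    assert (He : is_derive (fun y => exp (C * y)) x (C * exp (C * x))) by (auto_derive; [auto| ring]).
    assert (Hw : is_derive (fun y => F E y ^ 2 + F1 E y ^ 2) x
       (2 * F E x * F1 E x + 2 * F1 E x * (b * x * F1 E x - E * F E x))).
    { assert (H2 := is_derive_pow _ 2 x _ (F_d E x)). assert (H3 := is_derive_pow _ 2 x _ (F1_d E x)).
      assert (H4 := is_derive_plus _ _ x _ _ H2 H3). unfold plus in H4; simpl in H4.
      fixd H4. }
    assert (Hm := is_derive_mult _ _ x _ _ He Hw ltac:(intros; unfold mult; simpl; ring)).
    unfold mult, plus in Hm; simpl in Hm. fixd Hm. }
  assert (Hmono := mono_lb H _ z0 z 0 Hz (fun x _ => Hd x)).
  assert (Hpos : forall x, z0 <= x <= z -> 0 <= exp (C * x) * (C * w x + (2 * F E x * F1 E x + 2 * F1 E x * (b * x * F1 E x - E * F E x)))).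
  { intros x Hx. apply Rmult_le_pos; [left; apply exp_pos|].
    assert (HxM : Rabs x <= M).
    { unfold M. unfold Rabs at 1; destruct Rcase_abs;
      [ unfold Rabs; destruct (Rcase_abs z0), (Rcase_abs z); lra
      | unfold Rabs; destruct (Rcase_abs z0), (Rcase_abs z); lra ]. }
    destruct (energy_ineq x E (F E x) (F1 E x) M HxM) as [L _].
    unfold w, C. lra. }
  specialize (Hmono Hpos). unfold H, w in Hmono. rewrite H0, H1, F_z0, F1_z0 in Hmono.
  assert (0 < exp (C * z0) * (1 ^ 2 + T ^ 2)).
  { apply Rmult_lt_0_compat; [apply exp_pos| nra]. }
  lra.
Qed.

Lemma nonneg_pos E : (forall x, z0 <= x -> 0 <= F E x) -> forall x, z0 <= x -> 0 < F E x.
Proof.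
  intros Hn x Hx. destruct (Hn x Hx) as [H|H]; auto. exfalso.
  assert (Hxz : z0 < x) by (destruct (Req_dec x z0) as [->|]; [rewrite F_z0 in H; lra| lra]).
  assert (H1 : F1 E x = 0).
  { apply (min_deriv_zero (F E) x _ (x - z0) (F_d E x)); auto; [lra|].
    intros y Hy. apply Hn. apply Rabs_def2 in Hy. lra. }
  apply (no_double_zero E x); auto; lra.
Qed.

Lemma H_exp_F1_d E x : is_derive (fun y => exp ((- b / 2) * y ^ 2) * F1 E y) x
   (exp ((- b / 2) * x ^ 2) * (- E * F E x)).
Proof.
  assert (H := exp_mul_d (F1 E) (fun y => b * y * F1 E y - E * F E y) (- b / 2) x (F1_d E x)).
  fixd H. field.
Qed.

Lemma H_exp_F_d E x : is_derive (fun y => exp ((- b / 4) * y ^ 2) * F E y) x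
   (exp ((- b / 4) * x ^ 2) * (F1 E x - b * x / 2 * F E x)).
Proof.
  assert (H := exp_mul_d (F E) (F1 E) (- b / 4) x (F_d E x)).
  fixd H. field.
Qed.

Lemma Enonpos_F1 E : E <= 0 -> forall x, z0 <= x -> 0 < F1 E x.
Proof.
  intros HE z Hz. destruct (Rlt_le_dec 0 (F1 E z)) as [|Hle]; auto. exfalso.
  destruct (first_zero (F1 E) z0 z Hz (fun x _ => F1_c E x)) as [p [Hp [Hp0 Hbef]]];
    [rewrite F1_z0; auto| auto|].
  assert (HF : forall x, z0 <= x <= p -> 1 <= F E x).
  { intros x Hx. rewrite <- (F_z0 E).
    assert (H := mono_lb (F E) (F1 E) z0 x 0 ltac:(lra) (fun y _ => F_d E y)).
    assert (F E z0 + 0 * (x - z0) <= F E x); [|lra]. apply H.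
    intros y Hy. destruct (Req_dec y p) as [->|]; [lra|]. left; apply Hbef; lra. }
  assert (H := mono_lb _ _ z0 p 0 ltac:(lra) (fun y _ => H_exp_F1_d E y)).
  assert (HH : exp (- b / 2 * z0 ^ 2) * F1 E z0 + 0 * (p - z0) <= exp (- b / 2 * p ^ 2) * F1 E p).
  { apply H. intros y Hy. apply Rmult_le_pos; [left; apply exp_pos|].
    specialize (HF y Hy). nra. }
  rewrite Hp0, F1_z0 in HH. assert (0 < exp (- b / 2 * z0 ^ 2) * T) by (apply Rmult_lt_0_compat; [apply exp_pos|auto]).
  lra.
Qed.

Lemma Enonpos_F E : E <= 0 -> forall x, z0 <= x -> 1 <= F E x.
Proof.
  intros HE x Hx. rewrite <- (F_z0 E).
  assert (H := mono_lb (F E) (F1 E) z0 x 0 Hx (fun y _ => F_d E y)).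
  assert (F E z0 + 0 * (x - z0) <= F E x); [|lra]. apply H.
  intros y Hy. left. apply Enonpos_F1; auto; lra.
Qed.

Definition D E x := F1 E x - b * x / 2 * F E x.

Lemma D_d E x : is_derive (D E) x (b * x * F1 E x - E * F E x - b / 2 * F E x - b * x / 2 * F1 E x).
Proof.
  assert (Hl : is_derive (fun y => b * y / 2) x (b / 2)) by (auto_derive; [auto| field]).
  assert (Hm := is_derive_mult _ _ x _ _ Hl (F_d E x) ltac:(intros; unfold mult; simpl; ring)).
  assert (Hs := is_derive_minus _ _ x _ _ (F1_d E x) Hm).
  unfold minus, plus, opp, mult in Hs; simpl in Hs. unfold D. fixd Hs.
Qed.

Lemma D_c E x : continuity_pt (D E) x.
Proof. eapply deriv_cont; apply D_d. Qed.

Lemma F_pos_of_D E z1 x : z1 <= x -> 0 < F E z1 -> (forall y, z1 <= y <= x -> 0 <= D E y) -> 0 < F E x.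
Proof.
  intros Hx HF HD.
  assert (H := mono_lb _ _ z1 x 0 Hx (fun y _ => H_exp_F_d E y)).
  assert (HH : exp (- b / 4 * z1 ^ 2) * F E z1 + 0 * (x - z1) <= exp (- b / 4 * x ^ 2) * F E x).
  { apply H. intros y Hy. apply Rmult_le_pos; [left; apply exp_pos|]. apply HD; auto. }
  assert (0 < exp (- b / 4 * z1 ^ 2) * F E z1) by (apply Rmult_lt_0_compat; [apply exp_pos|auto]).
  assert (Hex := exp_pos (- b / 4 * x ^ 2)).
  destruct (Rlt_le_dec 0 (F E x)); auto. nra.
Qed.

Lemma trap_inv E z1 : 0 < z1 -> E + b / 2 < b ^ 2 * z1 ^ 2 / 4 -> 0 < F E z1 -> 0 < D E z1 ->
  forall x, z1 <= x -> 0 < D E x /\ 0 < F E x.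
Proof.
  intros Hz1 Hc HF HD.
  assert (HDp : forall x, z1 <= x -> 0 < D E x).
  { intros x Hx. destruct (Rlt_le_dec 0 (D E x)) as [|Hle]; auto. exfalso.
    destruct (first_zero (D E) z1 x Hx (fun y _ => D_c E y) HD Hle) as [p [Hp [Hp0 Hbef]]].
    assert (HFp : 0 < F E p).
    { apply (F_pos_of_D E z1 p); [lra|auto|]. intros y Hy.
      destruct (Req_dec y p) as [->|]; [lra|]. left; apply Hbef; lra. }
    assert (Hl := deriv_left_zero (D E) z1 p _ (D_d E p) ltac:(lra) Hp0 Hbef).
    unfold D in Hp0.
    assert (HF1 : F1 E p = b * p / 2 * F E p) by lra.
    rewrite HF1 in Hl.
    assert (Hpp : b ^ 2 * z1 ^ 2 / 4 <= b ^ 2 * p ^ 2 / 4).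
    { assert (z1 ^ 2 <= p ^ 2) by nra. assert (0 < b^2) by nra. nra. }
    assert (0 < (b ^ 2 * p ^ 2 / 4 - E - b / 2) * F E p) by (apply Rmult_lt_0_compat; lra).
    assert (b * p * (b * p / 2 * F E p) - E * F E p - b / 2 * F E p - b * p / 2 * (b * p / 2 * F E p)
       = (b ^ 2 * p ^ 2 / 4 - E - b / 2) * F E p) by field.
    lra. }
  intros x Hx. split; auto.
  apply (F_pos_of_D E z1 x Hx HF). intros y Hy. left. apply HDp. lra.
Qed.


Lemma gronwall E E0 Z G C : z0 <= Z -> (forall x, z0 <= x <= Z -> Rabs (F E0 x) <= G) ->
  2 + 2 * b * (Rabs z0 + Rabs Z) + Rabs E <= C ->
  forall x, z0 <= x <= Z ->
  (F E x - F E0 x) ^ 2 + (F1 E x - F1 E0 x) ^ 2 <= (E - E0) ^ 2 * G ^ 2 * (Z - z0) * exp (C * (Z - z0)).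
Proof.
  intros HZ HG HC x Hx.
  set (M := Rabs z0 + Rabs Z).
  set (De := E - E0).
  set (w := fun y => (F E y - F E0 y) ^ 2 + (F1 E y - F1 E0 y) ^ 2).
  set (dw := fun y => 2 * (F E y - F E0 y) * (F1 E y - F1 E0 y) + 2 * (F1 E y - F1 E0 y) *
      (b * y * (F1 E y - F1 E0 y) - E * (F E y - F E0 y) - De * F E0 y)).
  assert (Hw : forall y, is_derive w y (dw y)).
  { intros y.
    assert (Hd := is_derive_minus _ _ y _ _ (F_d E y) (F_d E0 y)).
    assert (Hd1 := is_derive_minus _ _ y _ _ (F1_d E y) (F1_d E0 y)).
    assert (H2 := is_derive_pow _ 2 y _ Hd). assert (H3 := is_derive_pow _ 2 y _ Hd1).
    assert (H4 := is_derive_plus _ _ y _ _ H2 H3).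
    unfold minus, plus, opp in H4; simpl in H4. unfold w, dw, De. fixd H4. }
  set (K := De ^ 2 * G ^ 2 * exp (- C * z0)).
  set (H := fun y => exp (- C * y) * w y - K * (y - z0)).
  assert (Hd : forall y, is_derive H y (exp (- C * y) * (dw y - C * w y) - K)).
  { intros y.
    assert (He : is_derive (fun t => exp (- C * t)) y (- C * exp (- C * y))) by (auto_derive; [auto| ring]).
    assert (Hm := is_derive_mult _ _ y _ _ He (Hw y) ltac:(intros; unfold mult; simpl; ring)).
    assert (Hl : is_derive (fun t => K * (t - z0)) y K) by (auto_derive; [auto| ring]).
    assert (Hs := is_derive_minus _ _ y _ _ Hm Hl).
    unfold minus, plus, opp, mult in Hs; simpl in Hs. unfold H. fixd Hs. }
  assert (Hmono := mono_ub H _ z0 x 0 ltac:(lra) (fun y _ => Hd y)).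
  assert (HG0 : 0 <= G) by (specialize (HG z0 ltac:(lra)); pose proof (Rabs_pos (F E0 z0)); lra).
  assert (Hle : forall y, z0 <= y <= x -> exp (- C * y) * (dw y - C * w y) - K <= 0).
  { intros y Hy.
    assert (HyM : Rabs y <= M).
    { unfold M. unfold Rabs at 1; destruct Rcase_abs;
      [ unfold Rabs; destruct (Rcase_abs z0), (Rcase_abs Z); lra
      | unfold Rabs; destruct (Rcase_abs z0), (Rcase_abs Z); lra ]. }
    destruct (energy_ineq y E (F E y - F E0 y) (F1 E y - F1 E0 y) M HyM) as [_ U].
    assert (Hg : Rabs (F E0 y) <= G) by (apply HG; lra).
    assert (Hg2 : F E0 y ^ 2 <= G ^ 2).
    { rewrite <- pow2_abs. pose proof (Rabs_pos (F E0 y)). nra. }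
    set (d := F E y - F E0 y) in *. set (d1 := F1 E y - F1 E0 y) in *.
    assert (Hw0 : 0 <= w y) by (unfold w; fold d d1; nra).
    assert (Hsq : - 2 * d1 * De * F E0 y <= d1 ^ 2 + De ^ 2 * G ^ 2).
    { pose proof (pow2_ge_0 (d1 + De * F E0 y)). assert (0 <= De ^2) by nra.
      assert (De ^ 2 * F E0 y ^ 2 <= De ^ 2 * G ^ 2) by (apply Rmult_le_compat_l; auto). nra. }
    assert (Hdw : dw y - C * w y <= De ^ 2 * G ^ 2).
    { unfold dw, w; fold d d1. unfold w in Hw0; fold d d1 in Hw0.
      assert (HC0 : (1 + 2 * b * M + Rabs E) * (d ^ 2 + d1 ^ 2) + (d ^ 2 + d1 ^ 2) <= C * (d ^ 2 + d1 ^ 2)).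
      { unfold M in *. nra. }
      assert (d1 ^ 2 <= d ^ 2 + d1 ^ 2) by nra. nra. }
    assert (HC1 : 0 < C) by (pose proof (Rabs_pos E); pose proof (Rabs_pos z0); pose proof (Rabs_pos Z);
       assert (0 <= b * (Rabs z0 + Rabs Z)) by (apply Rmult_le_pos; lra); lra).
    assert (Hexp : exp (- C * y) <= exp (- C * z0)).
    { destruct (Req_dec y z0) as [->|]; [lra| left; apply exp_increasing; nra]. }
    assert (0 <= De ^ 2 * G ^ 2) by nra.
    assert (exp (- C * y) * (dw y - C * w y) <= exp (- C * y) * (De ^ 2 * G ^ 2))
      by (apply Rmult_le_compat_l; [left; apply exp_pos| auto]).
    unfold K. nra. }
  specialize (Hmono Hle). unfold H in Hmono.
  assert (Hw0 : w z0 = 0) by (unfold w; rewrite !F_z0, !F1_z0; ring).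
  rewrite Hw0 in Hmono.
  assert (HC2 : 0 < C) by (pose proof (Rabs_pos E); pose proof (Rabs_pos z0); pose proof (Rabs_pos Z);
       assert (0 <= b * (Rabs z0 + Rabs Z)) by (apply Rmult_le_pos; lra); lra).
  assert (Hwx : w x <= K * (x - z0) * exp (C * x)).
  { assert (Hpos := exp_pos (C * x)).
    assert (E1 : exp (- C * x) * exp (C * x) = 1) by (rewrite <- exp_plus; replace (- C * x + C * x) with 0 by ring; apply exp_0).
    assert (exp (- C * x) * w x <= K * (x - z0)) by lra.
    replace (w x) with (exp (- C * x) * w x * exp (C * x)) by (rewrite Rmult_comm, <- Rmult_assoc, (Rmult_comm _ (exp (- C * x))), E1; ring).
    apply Rmult_le_compat_r; lra. }
  fold (w x). eapply Rle_trans; [exact Hwx|].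
  unfold K. replace (De ^ 2 * G ^ 2 * exp (- C * z0) * (x - z0) * exp (C * x)) with
    (De ^ 2 * G ^ 2 * (x - z0) * exp (C * (x - z0))).
  2:{ replace (C * (x - z0)) with (- C * z0 + C * x) by ring. rewrite exp_plus. ring. }
  assert (0 <= De ^ 2 * G ^ 2) by (assert (0 <= De^2) by nra; assert (0 <= G^2) by nra; nra).
  apply Rmult_le_compat.
  - apply Rmult_le_pos; lra.
  - left; apply exp_pos.
  - apply Rmult_le_compat_l; lra.
  - destruct (Req_dec x Z) as [->|]; [lra| left; apply exp_increasing; nra].
Qed.


Lemma small_sq De K e : 0 <= K -> 0 < e -> Rabs De < e / (K + 1) -> De ^ 2 * K < e ^ 2.
Proof.
  intros HK He HD.
  assert (H1 : Rabs De * (K + 1) < e).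
  { apply Rmult_lt_reg_r with (/ (K + 1)); [apply Rinv_0_lt_compat; lra|].
    rewrite Rmult_assoc, Rinv_r, Rmult_1_r by lra. exact HD. }
  pose proof (Rabs_pos De).
  assert (H2 : (Rabs De * (K + 1)) ^ 2 < e ^ 2).
  { assert (Ha : 0 <= Rabs De * (K + 1)) by (apply Rmult_le_pos; lra).
    revert Ha H1. generalize (Rabs De * (K + 1)). intros a Ha H1. nra. }
  rewrite <- (pow2_abs De).
  assert (K <= (K + 1) ^ 2) by nra.
  assert (0 <= Rabs De ^ 2) by nra.
  assert (Rabs De ^ 2 * K <= Rabs De ^ 2 * (K + 1) ^ 2) by (apply Rmult_le_compat_l; auto).
  replace ((Rabs De * (K + 1)) ^ 2) with (Rabs De ^ 2 * (K + 1) ^ 2) in H2 by ring.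
  lra.
Qed.

Lemma sq_lt_abs d e : 0 < e -> d ^ 2 < e ^ 2 -> - e < d < e.
Proof. intros He H. split; nra. Qed.

Lemma Fabs_c E x : continuity_pt (fun y => Rabs (F E y)) x.
Proof.
  apply (continuity_pt_comp (F E) Rabs x (F_c E x)). apply Rcontinuity_abs.
Qed.

Lemma B_open E0 x : z0 <= x -> F E0 x < 0 ->
  exists d, 0 < d /\ forall E, Rabs (E - E0) < d -> F E x < 0.
Proof.
  intros Hx Hneg.
  destruct (continuity_ab_maj (fun y => Rabs (F E0 y)) z0 x Hx (fun y _ => Fabs_c E0 y)) as [Mx [HMx _]].
  set (G := Rabs (F E0 Mx)).
  set (C := 3 + 2 * b * (Rabs z0 + Rabs x) + Rabs E0).
  set (K := G ^ 2 * (x - z0) * exp (C * (x - z0))).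
  assert (HK : 0 <= K).
  { unfold K. apply Rmult_le_pos; [apply Rmult_le_pos; [nra|lra]| left; apply exp_pos]. }
  set (e := - F E0 x).
  exists (Rmin 1 (e / (K + 1))). split.
  { apply Rmin_pos; [lra|]. apply Rdiv_lt_0_compat; unfold e; lra. }
  intros E HE.
  assert (HE1 : Rabs (E - E0) < 1) by (eapply Rlt_le_trans; [exact HE| apply Rmin_l]).
  assert (HE2 : Rabs (E - E0) < e / (K + 1)) by (eapply Rlt_le_trans; [exact HE| apply Rmin_r]).
  assert (HC : 2 + 2 * b * (Rabs z0 + Rabs x) + Rabs E <= C).
  { unfold C. assert (Rabs E <= Rabs E0 + 1); [|lra].
    replace E with (E0 + (E - E0)) by ring. eapply Rle_trans; [apply Rabs_triang| lra]. }
  assert (Hg := gronwall E E0 x G C Hx (fun y Hy => HMx y Hy) HC x ltac:(lra)).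
  fold K in Hg. replace ((E - E0) ^ 2 * G ^ 2 * (x - z0) * exp (C * (x - z0))) with ((E - E0) ^ 2 * K) in Hg by (unfold K; ring).
  assert (Hs := small_sq (E - E0) K e HK ltac:(unfold e; lra) HE2).
  assert (Hd : (F E x - F E0 x) ^ 2 < e ^ 2).
  { pose proof (pow2_ge_0 (F1 E x - F1 E0 x)). lra. }
  apply sq_lt_abs in Hd; [|unfold e; lra]. unfold e in Hd. lra.
Qed.

Lemma trap_open E0 z1 G : z0 <= z1 -> 0 < z1 -> E0 + b / 2 < b ^ 2 * z1 ^ 2 / 4 ->
  (forall x, z0 <= x <= z1 -> 1 <= F E0 x /\ F E0 x <= G) -> 0 < D E0 z1 ->
  exists d, 0 < d /\ forall E, E0 <= E < E0 + d -> forall x, z0 <= x -> 0 < F E x.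
Proof.
  intros Hz Hz1 Hc HG HD.
  set (C := 3 + 2 * b * (Rabs z0 + Rabs z1) + Rabs E0).
  assert (HG0 : 1 <= G) by (destruct (HG z0 ltac:(lra)); lra).
  set (K := G ^ 2 * (z1 - z0) * exp (C * (z1 - z0))).
  assert (HK : 0 <= K).
  { unfold K. apply Rmult_le_pos; [apply Rmult_le_pos; [nra|lra]| left; apply exp_pos]. }
  set (D0 := D E0 z1). set (L := 1 + b * z1 / 2).
  assert (HL : 0 < L) by (unfold L; assert (0 < b * z1) by nra; lra).
  set (e := Rmin (1/2) (D0 / (2 * L))).
  assert (He : 0 < e) by (apply Rmin_pos; [lra| apply Rdiv_lt_0_compat; unfold D0; lra]).
  exists (Rmin (Rmin 1 (e / (K + 1))) (b ^ 2 * z1 ^ 2 / 4 - E0 - b / 2)). split.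
  { apply Rmin_pos; [apply Rmin_pos; [lra| apply Rdiv_lt_0_compat; lra]| lra]. }
  intros E [HE0 HE].
  assert (Hm1 := Rmin_l (Rmin 1 (e / (K + 1))) (b ^ 2 * z1 ^ 2 / 4 - E0 - b / 2)).
  assert (Hm2 := Rmin_r (Rmin 1 (e / (K + 1))) (b ^ 2 * z1 ^ 2 / 4 - E0 - b / 2)).
  assert (Hm3 := Rmin_l 1 (e / (K + 1))). assert (Hm4 := Rmin_r 1 (e / (K + 1))).
  assert (HEa : Rabs (E - E0) = E - E0) by (apply Rabs_pos_eq; lra).
  assert (HE2 : Rabs (E - E0) < e / (K + 1)) by lra.
  assert (HC : 2 + 2 * b * (Rabs z0 + Rabs z1) + Rabs E <= C).
  { unfold C. assert (Rabs E <= Rabs E0 + 1); [|lra].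
    replace E with (E0 + (E - E0)) by ring. eapply Rle_trans; [apply Rabs_triang| lra]. }
  assert (HGa : forall x, z0 <= x <= z1 -> Rabs (F E0 x) <= G).
  { intros x Hx. destruct (HG x Hx). rewrite Rabs_pos_eq; lra. }
  assert (Hs := small_sq (E - E0) K e HK He HE2).
  assert (Hclose : forall x, z0 <= x <= z1 -> - e < F E x - F E0 x < e /\ - e < F1 E x - F1 E0 x < e).
  { intros x Hx. assert (Hg := gronwall E E0 z1 G C Hz HGa HC x Hx).
    replace ((E - E0) ^ 2 * G ^ 2 * (z1 - z0) * exp (C * (z1 - z0))) with ((E - E0) ^ 2 * K) in Hg by (unfold K; ring).
    pose proof (pow2_ge_0 (F1 E x - F1 E0 x)). pose proof (pow2_ge_0 (F E x - F E0 x)).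
    split; apply sq_lt_abs; auto; lra. }
  assert (Hel : e <= 1/2) by apply Rmin_l.
  assert (Hel2 : e <= D0 / (2 * L)) by apply Rmin_r.
  assert (HFpos : forall x, z0 <= x <= z1 -> 0 < F E x).
  { intros x Hx. destruct (Hclose x Hx) as [[A1 A2] _]. destruct (HG x Hx). lra. }
  assert (HDz : 0 < D E z1).
  { destruct (Hclose z1 ltac:(lra)) as [[A1 A2] [B1 B2]].
    unfold D. unfold D0, D in Hel2.
    assert (e * L <= (F1 E0 z1 - b * z1 / 2 * F E0 z1) / 2).
    { apply Rmult_le_reg_r with (/ L); [apply Rinv_0_lt_compat; lra|].
      rewrite Rmult_assoc, Rinv_r, Rmult_1_r by lra. unfold Rdiv in Hel2 |- *.
      rewrite Rinv_mult in Hel2. lra. }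
    assert (Hb2 : 0 < b * z1 / 2) by (assert (0 < b * z1) by nra; lra).
    assert (- (b * z1 / 2) * e < b * z1 / 2 * (F E z1 - F E0 z1)) by nra.
    assert (b * z1 / 2 * (F E z1 - F E0 z1) < b * z1 / 2 * e) by nra.
    unfold L in *. nra. }
  intros x Hx. destruct (Rle_lt_dec x z1) as [Hx1|Hx1].
  - apply HFpos; lra.
  - apply (trap_inv E z1 Hz1 ltac:(lra) (HFpos z1 ltac:(lra)) HDz x ltac:(lra)).
Qed.


Definition psi E x := F1 E x / F E x.
Definition psid E x := b * x * psi E x - E - psi E x ^ 2.

Lemma psi_d E x : F E x <> 0 -> is_derive (psi E) x (psid E x).
Proof.
  intros H. assert (Hd := is_derive_div _ _ x _ _ (F1_d E x) (F_d E x) H).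
  unfold psi, psid. eapply isd_eq; [exact Hd|]. unfold psi. field; auto.
Qed.

Lemma psi_c E x : F E x <> 0 -> continuity_pt (psi E) x.
Proof. intros H. eapply deriv_cont. apply psi_d; auto. Qed.

Lemma big_E : let Eb := b ^ 2 * (Rabs z0 + T + 4) ^ 2 / 2 + 1 in
  exists x, z0 <= x /\ F Eb x < 0.
Proof.
  intros Eb. destruct (Classical_Prop.classic (exists x, z0 <= x /\ F Eb x < 0)) as [H|H]; auto.
  exfalso.
  assert (Hpos : forall x, z0 <= x -> 0 < F Eb x).
  { apply nonneg_pos. intros x Hx. destruct (Rle_lt_dec 0 (F Eb x)); auto. exfalso; apply H; eauto. }
  set (M := Rabs z0 + T + 4).
  assert (HM : forall x, z0 <= x <= z0 + T + 4 -> psid Eb x <= - (psi Eb x) ^ 2 / 2 - 1).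
  { intros x Hx. unfold psid.
    assert (Hx2 : x ^ 2 <= M ^ 2).
    { assert (Rabs x <= M).
      { unfold M. unfold Rabs at 1; destruct Rcase_abs; unfold Rabs; destruct (Rcase_abs z0); lra. }
      rewrite <- (pow2_abs x). pose proof (Rabs_pos x). nra. }
    set (p := psi Eb x).
    assert (b * x * p <= p ^ 2 / 2 + b ^ 2 * x ^ 2 / 2) by (pose proof (pow2_ge_0 (p - b * x)); nra).
    assert (b ^ 2 * x ^ 2 <= b ^ 2 * M ^ 2) by (apply Rmult_le_compat_l; [nra|auto]).
    unfold Eb. fold M. lra. }
  set (x1 := z0 + T + 1). set (x2 := z0 + T + 4).
  assert (Hd : forall x, z0 <= x -> is_derive (psi Eb) x (psid Eb x)).
  { intros x Hx. apply psi_d. specialize (Hpos x Hx). lra. }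
  assert (Hpsi0 : psi Eb z0 = T) by (unfold psi; rewrite F_z0, F1_z0; field).
  assert (H1 : psi Eb x1 <= -1).
  { assert (HH := mono_ub (psi Eb) (psid Eb) z0 x1 (-1) ltac:(unfold x1; lra)
       (fun y Hy => Hd y ltac:(lra))).
    assert (psi Eb x1 <= psi Eb z0 + -1 * (x1 - z0)); [|unfold x1 in *; lra].
    apply HH. intros y Hy. specialize (HM y ltac:(unfold x1 in Hy; lra)).
    pose proof (pow2_ge_0 (psi Eb y)). lra. }
  assert (H2 : forall y, x1 <= y <= x2 -> psi Eb y <= -1).
  { intros y Hy.
    assert (HH := mono_ub (psi Eb) (psid Eb) x1 y (-1) ltac:(lra) (fun t Ht => Hd t ltac:(unfold x1 in *; lra))).
    assert (psi Eb y <= psi Eb x1 + -1 * (y - x1)); [|lra].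
    apply HH. intros t Ht. specialize (HM t ltac:(unfold x1, x2 in *; lra)).
    pose proof (pow2_ge_0 (psi Eb t)). lra. }
  assert (Hdi : forall y, x1 <= y <= x2 -> is_derive (fun t => / psi Eb t) y (- psid Eb y / psi Eb y ^ 2)).
  { intros y Hy. apply is_derive_inv; [apply Hd; unfold x1 in *; lra|]. specialize (H2 y Hy). lra. }
  assert (HH := mono_lb (fun t => / psi Eb t) _ x1 x2 (1/2) ltac:(unfold x1, x2; lra) Hdi).
  assert (HH2 : / psi Eb x1 + 1 / 2 * (x2 - x1) <= / psi Eb x2).
  { apply HH. intros y Hy. specialize (HM y ltac:(unfold x1, x2 in *; lra)). specialize (H2 y Hy).
    set (p := psi Eb y) in *.
    assert (0 < p ^ 2) by nra.
    apply Rle_trans with ((p ^ 2 / 2) / p ^ 2); [right; field; lra|].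
    unfold Rdiv. apply Rmult_le_compat_r; [left; apply Rinv_0_lt_compat; lra| lra]. }
  assert (Hi1 : -1 <= / psi Eb x1).
  { set (p := psi Eb x1) in *. apply Rmult_le_reg_r with (- p); [lra|].
    replace (/ p * - p) with (-1) by (field; lra). lra. }
  assert (Hi2 : / psi Eb x2 < 0).
  { assert (psi Eb x2 <= -1) by (apply H2; unfold x1, x2; lra). apply Rinv_lt_0_compat; lra. }
  unfold x1, x2 in *. lra.
Qed.


Definition Zt E := 1 + Rabs z0 + 4 * (E + b) / b ^ 2.

Lemma Zt_props E x : 0 <= E -> Zt E <= x -> z0 <= x /\ 1 <= x /\ E + b / 2 < b ^ 2 * x ^ 2 / 4.
Proof.
  intros HE Hx. unfold Zt in Hx. pose proof (Rabs_pos z0) as Habs0.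
  assert (H0 : 0 <= 4 * (E + b) / b ^ 2) by (apply Rmult_le_pos; [lra| left; apply Rinv_0_lt_compat; nra]).
  assert (z0 <= Rabs z0) by apply RRle_abs.
  repeat split; try lra.
  assert (Hb2 : 0 < b ^ 2) by nra. pose proof (Rabs_pos z0) as Habs.
  assert (H1 : b ^ 2 * (4 * (E + b) / b ^ 2) = 4 * (E + b)) by (field; lra).
  assert (b ^ 2 * (4 * (E + b) / b ^ 2) <= b ^ 2 * x) by (apply Rmult_le_compat_l; lra).
  assert (b ^ 2 * x <= b ^ 2 * x ^ 2) by (apply Rmult_le_compat_l; nra).
  lra.
Qed.

Lemma psi_pos_bound E x : 0 < F E x -> (psi E x <= b * x / 2 <-> D E x <= 0).
Proof.
  intros HF. unfold psi, D. split; intros H.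
  - apply Rmult_le_compat_r with (r := F E x) in H; [|lra].
    unfold Rdiv in H. rewrite Rmult_assoc, Rinv_l, Rmult_1_r in H by lra. lra.
  - apply Rmult_le_reg_r with (F E x); auto. unfold Rdiv. rewrite Rmult_assoc, Rinv_l, Rmult_1_r by lra. lra.
Qed.

Lemma notrap_bound E : 0 <= E -> (forall x, z0 <= x -> 0 < F E x) -> (forall x, z0 <= x -> 0 < F1 E x) ->
  (forall x, z0 <= x -> 0 < x -> E + b / 2 < b ^ 2 * x ^ 2 / 4 -> D E x <= 0) ->
  forall x, Zt E <= x -> psi E x <= 2 * E / (b * x).
Proof.
  intros HE HF HF1 NT x2 Hx2.
  destruct (Zt_props E x2 HE Hx2) as [Hx2a [Hx2b Hx2c]].
  assert (Hup : forall y, x2 <= y -> psi E y <= b * y / 2).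
  { intros y Hy. destruct (Zt_props E y HE ltac:(lra)) as [? [? ?]].
    apply psi_pos_bound; [apply HF; lra|]. apply NT; lra. }
  assert (Hpp : forall y, z0 <= y -> 0 < psi E y).
  { intros y Hy. unfold psi. apply Rdiv_lt_0_compat; auto. }
  assert (Hd : forall y, x2 <= y -> is_derive (psi E) y (psid E y)).
  { intros y Hy. apply psi_d. specialize (HF y ltac:(lra)). lra. }
  assert (Hge : forall y, x2 <= y -> b * y / 2 * psi E y - E <= psid E y).
  { intros y Hy. unfold psid. specialize (Hup y Hy). specialize (Hpp y ltac:(lra)).
    assert (0 <= psi E y * (b * y / 2 - psi E y)) by (apply Rmult_le_pos; lra). nra. }
  destruct (Rle_lt_dec (psi E x2) (2 * E / (b * x2))) as [|Hgt]; auto. exfalso.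
  remember (psi E x2) as s eqn:Heqs.
  assert (Hs : 0 < s) by (rewrite Heqs; apply Hpp; lra).
  assert (Hq : 0 < b * x2 / 2 * s - E).
  { unfold Rdiv in Hgt. rewrite Rinv_mult in Hgt.
    assert (Hbx : 0 < b * x2) by nra.
    assert (2 * E < s * (b * x2)).
    { apply Rmult_lt_compat_r with (r := b * x2) in Hgt; auto.
      replace (2 * E * (/ b * / x2) * (b * x2)) with (2 * E) in Hgt by (field; lra). lra. }
    assert (b * x2 / 2 * s = s * (b * x2) / 2) by field. lra. }
  set (g := fun y => b * y / 2 * psi E y - E).
  assert (Hgd : forall y, x2 <= y -> is_derive g y (b / 2 * psi E y + b * y / 2 * psid E y)).
  { intros y Hy.
    assert (Hl : is_derive (fun t => b * t / 2) y (b / 2)) by (auto_derive; [auto| field]).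
    assert (Hm := is_derive_mult _ _ y _ _ Hl (Hd y Hy) ltac:(intros; unfold mult; simpl; ring)).
    assert (Hc : is_derive (fun _ : R => E) y 0) by (auto_derive; auto).
    assert (Hs2 := is_derive_minus _ _ y _ _ Hm Hc).
    unfold minus, plus, opp, mult in Hs2; simpl in Hs2. unfold g. fixd Hs2. }
  assert (Hgpos : forall y, x2 <= y -> 0 < g y).
  { intros y Hy. destruct (Rlt_le_dec 0 (g y)) as [|Hle]; auto. exfalso.
    destruct (first_zero g x2 y Hy (fun t Ht => deriv_cont _ _ _ (Hgd t ltac:(lra)))) as [p [Hp [Hp0 Hbef]]];
      [unfold g; rewrite <- Heqs; lra| auto|].
    assert (Hmp := mono_lb (psi E) (psid E) x2 p 0 ltac:(lra) (fun t Ht => Hd t ltac:(lra))).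
    assert (Hpsp : psi E x2 + 0 * (p - x2) <= psi E p).
    { apply Hmp. intros t Ht. specialize (Hge t ltac:(lra)).
      destruct (Req_dec t p) as [->|]; [unfold g in Hp0; lra|].
      specialize (Hbef t ltac:(lra)). unfold g in Hbef. lra. }
    unfold g in Hp0. rewrite <- Heqs in Hpsp.
    assert (b * x2 / 2 * s <= b * p / 2 * psi E p).
    { apply Rmult_le_compat; try lra. assert (0 < b * x2) by nra. lra.
      assert (b * x2 <= b * p) by (apply Rmult_le_compat_l; lra). lra. }
    lra. }
  assert (Hinc : forall y, x2 <= y -> s <= psi E y).
  { intros y Hy. assert (Hmp := mono_lb (psi E) (psid E) x2 y 0 Hy (fun t Ht => Hd t ltac:(lra))).
    assert (psi E x2 + 0 * (y - x2) <= psi E y); [|rewrite <- Heqs in *; lra].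
    apply Hmp. intros t Ht. specialize (Hge t ltac:(lra)). specialize (Hgpos t ltac:(lra)). unfold g in Hgpos. lra. }
  set (x3 := x2 + 2 * (E + b) / (s * b)).
  assert (Hx3 : 2 * (E + b) / (s * b) <= x3).
  { unfold x3. lra. }
  assert (H0x3 : 0 <= 2 * (E + b) / (s * b)) by (apply Rmult_le_pos; [lra| left; apply Rinv_0_lt_compat; nra]).
  assert (Hslope : forall y, x3 <= y -> b <= psid E y).
  { intros y Hy. specialize (Hge y ltac:(unfold x3 in *; lra)). specialize (Hinc y ltac:(unfold x3 in *; lra)).
    assert (b * y / 2 * s <= b * y / 2 * psi E y) by (apply Rmult_le_compat_l; [nra| auto]).
    assert (s * b * (2 * (E + b) / (s * b)) = 2 * (E + b)) by (field; nra).
    assert (s * b * (2 * (E + b) / (s * b)) <= s * b * y) by (apply Rmult_le_compat_l; [nra| lra]).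
    nra. }
  set (x4 := 2 * x3 + 1).
  assert (Hm4 := mono_lb (psi E) (psid E) x3 x4 b ltac:(unfold x4, x3 in *; lra) (fun t Ht => Hd t ltac:(unfold x4, x3 in *; lra))).
  assert (H4 : psi E x3 + b * (x4 - x3) <= psi E x4) by (apply Hm4; intros t Ht; apply Hslope; lra).
  assert (Hs3 := Hinc x3 ltac:(unfold x3 in *; lra)).
  assert (Hu4 := Hup x4 ltac:(unfold x4, x3 in *; lra)).
  unfold x4 in *. lra.
Qed.


Lemma Estar_F1 E : 0 < E -> (forall x, z0 <= x -> 0 < F E x) -> forall x, z0 <= x -> 0 <= F1 E x.
Proof.
  intros HE HF z Hz. destruct (Rle_lt_dec 0 (F1 E z)) as [|Hlt]; auto. exfalso.
  destruct (first_zero (F1 E) z0 z Hz (fun x _ => F1_c E x)) as [p [Hp [Hp0 Hbef]]];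
    [rewrite F1_z0; auto| lra|].
  assert (Hop : forall x, is_derive (fun y => - F1 E y) x (- (b * x * F1 E x - E * F E x))).
  { intros x. apply (is_derive_opp (F1 E) x). apply F1_d. }
  assert (Hneg : forall s, p < s -> F1 E s < 0).
  { intros s Hs. destruct (Rlt_le_dec (F1 E s) 0) as [|Hge]; auto. exfalso.
    destruct (deriv_pos_right (fun y => - F1 E y) p _ (Hop p)) as [d [Hd Hdr]].
    { rewrite Hp0. specialize (HF p ltac:(lra)). nra. }
    { rewrite Hp0; ring. }
    set (p' := p + Rmin d (s - p) / 2).
    assert (Hp' : p < p' < s /\ p' < p + d) by (unfold p', Rmin; destruct Rle_dec; lra).
    specialize (Hdr p' ltac:(lra)).
    destruct (first_zero (fun y => - F1 E y) p' s ltac:(lra)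
       (fun x _ => deriv_cont _ _ _ (Hop x)) Hdr ltac:(lra)) as [q [Hq [Hq0 Hqb]]].
    assert (Hl := deriv_left_zero _ p' q _ (Hop q) ltac:(lra) Hq0 Hqb).
    assert (F1 E q = 0) by lra. rewrite H in Hl. specialize (HF q ltac:(lra)). nra. }
  set (x0 := Rmax p 0 + 1).
  assert (Hx0 : p < x0 /\ 0 < x0) by (unfold x0, Rmax; destruct Rle_dec; lra).
  assert (HF1x0 := Hneg x0 ltac:(lra)).
  assert (HF1le : forall y, x0 <= y -> F1 E y <= F1 E x0).
  { intros y Hy. assert (H := mono_ub (F1 E) _ x0 y 0 Hy (fun t _ => F1_d E t)).
    assert (F1 E y <= F1 E x0 + 0 * (y - x0)); [|lra]. apply H.
    intros t Ht. specialize (Hneg t ltac:(lra)). specialize (HF t ltac:(lra)).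
    assert (0 <= b * t) by nra. nra. }
  set (y := x0 + F E x0 / (- F1 E x0) + 1).
  assert (Hy0 : 0 < F E x0 / (- F1 E x0)) by (apply Rdiv_lt_0_compat; [apply HF; lra| lra]).
  assert (H := mono_ub (F E) (F1 E) x0 y (F1 E x0) ltac:(unfold y; lra) (fun t _ => F_d E t)).
  assert (HFy : F E y <= F E x0 + F1 E x0 * (y - x0)) by (apply H; intros t Ht; apply HF1le; lra).
  assert (HFy0 := HF y ltac:(unfold y; lra)).
  assert (F1 E x0 * (y - x0) = - F E x0 + F1 E x0) by (unfold y; field; lra).
  lra.
Qed.

Lemma Estar_F1_pos E : 0 < E -> (forall x, z0 <= x -> 0 < F E x) -> forall x, z0 <= x -> 0 < F1 E x.
Proof.
  intros HE HF x Hx. destruct (Estar_F1 E HE HF x Hx) as [|H0]; auto. exfalso.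
  assert (Hop : is_derive (fun y => - F1 E y) x (- (b * x * F1 E x - E * F E x))).
  { apply (is_derive_opp (F1 E) x). apply F1_d. }
  destruct (deriv_pos_right _ x _ Hop) as [d [Hd Hdr]].
  { rewrite <- H0. specialize (HF x Hx). nra. }
  { rewrite <- H0; ring. }
  specialize (Hdr (x + d / 2) ltac:(lra)).
  assert (Hnn := Estar_F1 E HE HF (x + d / 2) ltac:(lra)). lra.
Qed.

Lemma psid_d E x : F E x <> 0 ->
  is_derive (psid E) x (b * psi E x + b * x * psid E x - 2 * psi E x * psid E x).
Proof.
  intros H. assert (Hp := psi_d E x H).
  assert (Hl : is_derive (fun t => b * t) x b) by (auto_derive; [auto| ring]).
  assert (Hm := is_derive_mult _ _ x _ _ Hl Hp ltac:(intros; unfold mult; simpl; ring)).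
  assert (Hc : is_derive (fun _ : R => E) x 0) by (auto_derive; auto).
  assert (H2 := is_derive_pow _ 2 x _ Hp).
  assert (Hs := is_derive_minus _ _ x _ _ (is_derive_minus _ _ x _ _ Hm Hc) H2).
  unfold minus, plus, opp, mult in Hs; simpl in Hs. unfold psid at 1. fixd Hs.
Qed.

Lemma psid_neg E : 0 < E -> (forall x, z0 <= x -> 0 < F E x) -> (forall x, z0 <= x -> 0 < F1 E x) ->
  (forall x, Zt E <= x -> psi E x <= 2 * E / (b * x)) -> forall x, z0 <= x -> psid E x < 0.
Proof.
  intros HE HF HF1 Hbd x2 Hx2.
  assert (Hpp : forall y, z0 <= y -> 0 < psi E y) by (intros y Hy; unfold psi; apply Rdiv_lt_0_compat; auto).
  assert (Hd : forall y, z0 <= y -> is_derive (psid E) y (b * psi E y + b * y * psid E y - 2 * psi E y * psid E y)).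
  { intros y Hy. apply psid_d. specialize (HF y Hy). lra. }
  destruct (Rlt_le_dec (psid E x2) 0) as [|Hge]; auto. exfalso.
  assert (Hx3 : exists x3, x2 <= x3 /\ 0 < psid E x3).
  { destruct Hge as [Hgt|Heq]; [exists x2; split; [lra|auto]|].
    destruct (deriv_pos_right (psid E) x2 _ (Hd x2 Hx2)) as [d [Hd0 Hdr]].
    { rewrite <- Heq. specialize (Hpp x2 Hx2). nra. }
    { auto. }
    exists (x2 + d / 2). split; [lra| apply Hdr; lra]. }
  destruct Hx3 as [x3 [Hx3 Hp3]].
  assert (Hpos : forall y, x3 <= y -> 0 < psid E y).
  { intros y Hy. destruct (Rlt_le_dec 0 (psid E y)) as [|Hle]; auto. exfalso.
    destruct (first_zero (psid E) x3 y Hy (fun t _ => deriv_cont _ _ _ (Hd t ltac:(lra))) Hp3 Hle)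
      as [p [Hp [Hp0 Hbef]]].
    assert (Hl := deriv_left_zero _ x3 p _ (Hd p ltac:(lra)) ltac:(lra) Hp0 Hbef).
    rewrite Hp0 in Hl. specialize (Hpp p ltac:(lra)). nra. }
  set (s := psi E x3).
  assert (Hs : 0 < s) by (apply Hpp; lra).
  assert (Hinc : forall y, x3 <= y -> s <= psi E y).
  { intros y Hy. assert (H := mono_lb (psi E) (psid E) x3 y 0 Hy (fun t _ => psi_d E t ltac:(specialize (HF t ltac:(lra)); lra))).
    assert (psi E x3 + 0 * (y - x3) <= psi E y); [|unfold s; lra].
    apply H. intros t Ht. left; apply Hpos; lra. }
  assert (HZ := Zt_props E (Zt E) ltac:(lra) ltac:(lra)).
  set (y := Rmax (Zt E) x3 + 2 * E / (b * s) + 1).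
  assert (Hq : 0 < 2 * E / (b * s)) by (apply Rdiv_lt_0_compat; nra).
  assert (Hy1 : Zt E <= y /\ x3 <= y) by (unfold y, Rmax; destruct Rle_dec; lra).
  assert (Hy2 : 2 * E / (b * s) < y) by (unfold y, Rmax; destruct Rle_dec; lra).
  assert (Hyp : 0 < y) by lra.
  specialize (Hbd y (proj1 Hy1)). specialize (Hinc y (proj2 Hy1)).
  assert (2 * E / (b * y) < s).
  { apply Rmult_lt_reg_r with (b * y); [nra|].
    replace (2 * E / (b * y) * (b * y)) with (2 * E) by (field; nra).
    apply Rmult_lt_compat_r with (r := b * s) in Hy2; [|nra].
    replace (2 * E / (b * s) * (b * s)) with (2 * E) in Hy2 by (field; nra). nra. }
  lra.
Qed.


Definition Bset E := exists x, z0 <= x /\ F E x < 0.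

Lemma Bset_pos E : Bset E -> 0 < E.
Proof.
  intros [x [Hx Hn]]. destruct (Rlt_le_dec 0 E); auto.
  assert (H := Enonpos_F E r x Hx). lra.
Qed.

Lemma F_ge1 E : (forall x, z0 <= x -> 0 <= F1 E x) ->
  (forall x, z0 <= x -> 1 <= F E x) /\ (forall x y, z0 <= x -> x <= y -> F E x <= F E y).
Proof.
  intros H.
  assert (Hm : forall x y, z0 <= x -> x <= y -> F E x <= F E y).
  { intros x y Hx Hxy. assert (HH := mono_lb (F E) (F1 E) x y 0 Hxy (fun t _ => F_d E t)).
    assert (F E x + 0 * (y - x) <= F E y); [|lra]. apply HH. intros t Ht. apply H. lra. }
  split; auto. intros x Hx. rewrite <- (F_z0 E). apply Hm; lra.
Qed.

Lemma no_trap E0 : (forall d, 0 < d -> exists E, Bset E /\ E0 <= E < E0 + d) ->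
  (forall x, z0 <= x -> 0 <= F1 E0 x) ->
  forall x, z0 <= x -> 0 < x -> E0 + b / 2 < b ^ 2 * x ^ 2 / 4 -> D E0 x <= 0.
Proof.
  intros Hclose HF1 x Hx Hx0 Hc. destruct (Rle_lt_dec (D E0 x) 0) as [|HD]; auto. exfalso.
  destruct (F_ge1 E0 HF1) as [Hge1 Hmono].
  destruct (trap_open E0 x (F E0 x) Hx Hx0 Hc) as [d [Hd Hall]]; auto.
  { intros y Hy. split; [apply Hge1; lra| apply Hmono; lra]. }
  destruct (Hclose d Hd) as [E [[y [Hy HFy]] HE]].
  specialize (Hall E HE y Hy). lra.
Qed.

Lemma exists_good : exists E, 0 < E /\ (forall x, z0 <= x -> 0 < F E x) /\
  (forall x, z0 <= x -> 0 < F1 E x) /\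
  (forall x, z0 <= x -> psid E x < 0) /\ (forall x, Zt E <= x -> psi E x <= 2 * E / (b * x)).
Proof.
  set (S := fun u => Bset (- u)).
  assert (Hbd : bound S).
  { exists 0. intros u Hu. apply Bset_pos in Hu. lra. }
  assert (Hne : exists u, S u).
  { destruct big_E as [x Hx]. exists (- (b ^ 2 * (Rabs z0 + T + 4) ^ 2 / 2 + 1)). unfold S; cbv beta. rewrite Ropp_involutive. exists x. exact Hx. }
  destruct (completeness S Hbd Hne) as [m [Hub Hlub]].
  set (Es := - m).
  assert (Hlb : forall E, Bset E -> Es <= E).
  { intros E HE. assert (- E <= m); [|unfold Es; lra]. apply Hub. unfold S. rewrite Ropp_involutive. auto. }
  assert (Hclose : forall d, 0 < d -> exists E, Bset E /\ Es <= E < Es + d).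
  { intros d Hd. destruct (Classical_Prop.classic (exists E, Bset E /\ E < Es + d)) as [[E [HE1 HE2]]|Hn].
    - exists E. split; [exact HE1| split; [apply Hlb; auto| auto]].
    - exfalso. assert (m <= m - d); [|lra]. apply Hlub. intros u Hu.
      destruct (Rle_lt_dec u (m - d)); auto. exfalso. apply Hn. exists (- u). split; auto. unfold Es. lra. }
  assert (HEs0 : 0 <= Es).
  { assert (m <= 0); [|unfold Es; lra]. apply Hlub. intros u Hu. apply Bset_pos in Hu. lra. }
  assert (HnB : ~ Bset Es).
  { intros [x [Hx Hn]]. destruct (B_open Es x Hx Hn) as [d [Hd Hall]].
    assert (Bset (Es - d / 2)).
    { exists x. split; auto. apply Hall. replace (Es - d / 2 - Es) with (- (d / 2)) by ring.
      rewrite Rabs_Ropp, Rabs_pos_eq; lra. }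
    specialize (Hlb _ H). lra. }
  assert (HFpos : forall x, z0 <= x -> 0 < F Es x).
  { apply nonneg_pos. intros x Hx. destruct (Rle_lt_dec 0 (F Es x)); auto. exfalso. apply HnB. exists x; auto. }
  assert (HEs : 0 < Es).
  { destruct HEs0 as [|H0]; auto. exfalso.
    assert (HF1 : forall x, z0 <= x -> 0 < F1 Es x) by (apply Enonpos_F1; lra).
    assert (NT := no_trap Es Hclose (fun x Hx => Rlt_le _ _ (HF1 x Hx))).
    assert (Hb0 := notrap_bound Es ltac:(lra) HFpos HF1 NT (Zt Es) ltac:(lra)).
    destruct (Zt_props Es (Zt Es) ltac:(lra) ltac:(lra)) as [HZ1 [HZ2 _]].
    assert (2 * Es / (b * Zt Es) = 0) by (rewrite <- H0; unfold Rdiv; ring).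
    assert (0 < psi Es (Zt Es)) by (unfold psi; apply Rdiv_lt_0_compat; [apply HF1| apply HFpos]; lra).
    lra. }
  assert (HF1 := Estar_F1_pos Es HEs HFpos).
  assert (NT := no_trap Es Hclose (fun x Hx => Rlt_le _ _ (HF1 x Hx))).
  assert (Hbd2 := notrap_bound Es ltac:(lra) HFpos HF1 NT).
  exists Es. repeat split; auto.
  apply psid_neg; auto.
Qed.

End Main.

Ltac fixd H := eapply isd_eq; [eapply is_derive_ext; [|exact H]; intros; simpl; try ring|]; simpl; try ring.

Lemma alg_eq sigma eta alpha_hat h a E y p : 0 < sigma -> 0 < eta -> 0 < alpha_hat ->
  let k := alpha_hat / (2 * sigma ^ 2) in
  let c := 2 / sigma ^ 2 in
  let z0 := - a / eta + alpha_hat * h / (2 * eta ^ 2) in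
  let v := h / eta - p / k in
  let dv := - (c * eta * (y + z0) * p - E - p ^ 2) / k in
  (E - k ^ 2 * h ^ 2 / eta ^ 2 + k * c * a * h / eta) / (k * c) =
  - (alpha_hat / 4) * v ^ 2 + / 2 * sigma ^ 2 * dv - eta * y * v + a * v + h * y.
Proof.
  intros Hs He Ha k c z0 v dv. unfold v, dv, z0, k, c. field. repeat split; lra.
Qed.

Lemma shift_scal_d (f : R -> R) (df z0 k C x : R) : is_derive f (x + z0) df ->
  is_derive (fun t => C - f (t + z0) / k) x (- df / k).
Proof.
  intros H.
  assert (Hg : is_derive (fun t => t + z0) x 1) by (auto_derive; [auto|ring]).
  assert (H1 := is_derive_comp f _ x _ _ H Hg).
  assert (H2 := is_derive_scal _ x (- / k) _ H1).
  assert (H3 := is_derive_plus _ _ x _ _ (is_derive_const C x) H2).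
  unfold plus, zero, scal, mult in H3; simpl in H3. fixd H3. all: unfold Rdiv, mult; simpl; ring.
Qed.

Lemma ball_R (x e y : R) : ball x e y <-> Rabs (y - x) < e.
Proof. reflexivity. Qed.

Lemma right_quot (f : R -> R) l : is_derive f 0 l ->
  filterlim (fun t => (f t - f 0) / t) (at_right 0) (locally l).
Proof.
  intros H. apply is_derive_Reals in H. apply filterlim_locally. intros eps.
  destruct (H eps (cond_pos eps)) as [d Hd].
  exists d. intros y Hy Hypos. apply ball_R in Hy. simpl in Hypos. apply ball_R.
  change (Rabs (y - 0) < d) in Hy. rewrite Rminus_0_r in Hy. change (0 < y) in Hypos.
  assert (Hh := Hd y ltac:(lra) Hy). rewrite Rplus_0_l in Hh. exact Hh.
Qed.


Theorem theorem1 (sigma eta alpha_hat h r a : R) :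
  0 < sigma -> 0 < eta -> 0 < alpha_hat -> 0 < h -> 0 <= r ->
  exists (beta_star : R) (v dv : R -> R),
    0 < beta_star /\
    C1_nonneg v dv /\
    (forall y, 0 <= y ->
       beta_star = - (alpha_hat / 4) * (v y) ^ 2 + / 2 * sigma ^ 2 * dv y
                   - eta * y * v y + a * v y + h * y) /\
    v 0 = - r /\
    (forall x y, 0 <= x -> x <= y -> v x <= v y) /\
    filterlim v (Rbar_locally p_infty) (locally (h / eta)).
Proof.
  intros Hs He Ha Hh Hr.
  set (k := alpha_hat / (2 * sigma ^ 2)).
  set (c := 2 / sigma ^ 2).
  set (z0 := - a / eta + alpha_hat * h / (2 * eta ^ 2)).
  set (bb := c * eta).
  set (T := k * (h / eta + r)).
  assert (Hk : 0 < k) by (unfold k; apply Rdiv_lt_0_compat; nra).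
  assert (Hc : 0 < c) by (unfold c; apply Rdiv_lt_0_compat; nra).
  assert (Hbb : 0 < bb) by (unfold bb; nra).
  assert (HT : 0 < T) by (unfold T; assert (0 < h / eta) by (apply Rdiv_lt_0_compat; lra); nra).
  destruct (exists_good bb z0 T Hbb HT) as [E [HE [HF [HF1 [Hpd Hbd]]]]].
  set (ps := psi bb z0 T E).
  set (v := fun y => h / eta - ps (y + z0) / k).
  set (dv := fun y => - psid bb z0 T E (y + z0) / k).
  set (beta := (E - k ^ 2 * h ^ 2 / eta ^ 2 + k * c * a * h / eta) / (k * c)).
  assert (Hps : forall z, z0 <= z -> is_derive ps z (psid bb z0 T E z)).
  { intros z Hz. apply psi_d; auto. specialize (HF z Hz). lra. }
  assert (Hvd : forall y, 0 <= y -> is_derive v y (dv y)).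
  { intros y Hy. apply shift_scal_d. apply Hps. lra. }
  assert (Hpsd_c : forall y, 0 <= y -> continuity_pt dv y).
  { intros y Hy.
    assert (Hd := psid_d bb z0 T Hbb E (y + z0) ltac:(specialize (HF (y + z0) ltac:(lra)); lra)).
    assert (Hs2 := shift_scal_d _ _ z0 k 0 y Hd).
    apply (deriv_cont dv y (- (bb * psi bb z0 T E (y + z0) + bb * (y + z0) * psid bb z0 T E (y + z0) - 2 * psi bb z0 T E (y + z0) * psid bb z0 T E (y + z0)) / k)). eapply is_derive_ext; [|exact Hs2]. intros t. simpl. unfold dv. unfold Rdiv. ring. }
  exists beta, v, dv.
  assert (Heq : forall y, 0 <= y -> beta = - (alpha_hat / 4) * (v y) ^ 2 + / 2 * sigma ^ 2 * dv y
                   - eta * y * v y + a * v y + h * y).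
  { intros y Hy. unfold beta, v, dv, psid. fold ps.
    assert (H := alg_eq sigma eta alpha_hat h a E y (ps (y + z0)) Hs He Ha). cbv zeta in H.
    exact H. }
  assert (Hpsp : forall z, z0 <= z -> 0 < ps z).
  { intros z Hz. unfold ps, psi. apply Rdiv_lt_0_compat; auto. }
  assert (Hv0 : v 0 = - r).
  { unfold v. replace (0 + z0) with z0 by ring. unfold ps, psi. rewrite F_z0, F1_z0. unfold T. field. lra. }
  assert (Hmono : forall x y, 0 <= x -> x <= y -> v x <= v y).
  { intros x y Hx Hxy.
    assert (Hm := mono_ub ps (psid bb z0 T E) (x + z0) (y + z0) 0 ltac:(lra) (fun t Ht => Hps t ltac:(lra))).
    assert (ps (y + z0) <= ps (x + z0)).
    { assert (ps (y + z0) <= ps (x + z0) + 0 * (y + z0 - (x + z0))); [|lra].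
      apply Hm. intros t Ht. left. apply Hpd. lra. }
    unfold v. unfold Rdiv. assert (/ k > 0) by (apply Rinv_0_lt_compat; lra). nra. }
  assert (HZ := Zt_props bb z0 Hbb E (Zt bb z0 E) ltac:(lra) ltac:(lra)).
  assert (Hsmall : forall e, 0 < e -> forall y, Rabs z0 + Zt bb z0 E + 2 * E / (bb * k * e) < y -> ps (y + z0) / k < e).
  { intros e He0 y Hy. pose proof (Rabs_pos z0). pose proof (RRle_abs (- z0)). rewrite Rabs_Ropp in *.
    assert (Hq : 0 < 2 * E / (bb * k * e)) by (apply Rdiv_lt_0_compat; [lra| apply Rmult_lt_0_compat; [nra| lra]]).
    assert (Hy1 : Zt bb z0 E <= y + z0) by lra.
    assert (Hy2 : 2 * E / (bb * k * e) < y + z0) by lra.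
    specialize (Hbd (y + z0) Hy1). fold ps in Hbd.
    destruct HZ as [_ [HZ1 _]].
    assert (Hyz : 0 < y + z0) by lra.
    assert (2 * E / (bb * (y + z0)) < k * e).
    { apply Rmult_lt_reg_r with (bb * (y + z0)); [nra|].
      replace (2 * E / (bb * (y + z0)) * (bb * (y + z0))) with (2 * E) by (field; nra).
      apply Rmult_lt_compat_r with (r := bb * k * e) in Hy2; [|apply Rmult_lt_0_compat; [nra| lra]].
      replace (2 * E / (bb * k * e) * (bb * k * e)) with (2 * E) in Hy2 by (field; repeat split; nra).
      nra. }
    apply Rmult_lt_reg_r with k; auto. unfold Rdiv. rewrite Rmult_assoc, Rinv_l, Rmult_1_r by lra. lra. }
  assert (Hlim : filterlim v (Rbar_locally p_infty) (locally (h / eta))).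
  { apply filterlim_locally. intros eps. simpl.
    exists (Rabs z0 + Zt bb z0 E + 2 * E / (bb * k * eps)). intros y Hy. apply ball_R.
    assert (H1 := Hsmall eps (cond_pos eps) y Hy).
    assert (H2 : 0 < ps (y + z0) / k).
    { apply Rdiv_lt_0_compat; auto. apply Hpsp. pose proof (Rabs_pos z0). pose proof (RRle_abs (- z0)).
      rewrite Rabs_Ropp in *. destruct HZ as [? [? ?]].
      assert (0 <= 2 * E / (bb * k * eps)) by (left; apply Rdiv_lt_0_compat; [lra| apply Rmult_lt_0_compat; [nra| apply cond_pos]]).
      lra. }
    unfold v. replace (h / eta - ps (y + z0) / k - h / eta) with (- (ps (y + z0) / k)) by ring.
    rewrite Rabs_Ropp, Rabs_pos_eq; lra. }
  assert (Hdvpos : forall y, 0 <= y -> 0 < dv y).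
  { intros y Hy. unfold dv. specialize (Hpd (y + z0) ltac:(lra)).
    unfold Rdiv. assert (/ k > 0) by (apply Rinv_0_lt_compat; lra). nra. }
  assert (Hroot : exists y, 0 <= y /\ v y = 0).
  { destruct Hr as [Hr|Hr].
    - set (Y := Rabs z0 + Zt bb z0 E + 2 * E / (bb * k * (h / eta)) + 1).
      assert (Hhe : 0 < h / eta) by (apply Rdiv_lt_0_compat; lra).
      assert (HvY : 0 < v Y).
      { assert (H1 := Hsmall (h / eta) Hhe Y ltac:(unfold Y; lra)). unfold v. lra. }
      assert (HY0 : 0 < Y).
      { unfold Y. pose proof (Rabs_pos z0). destruct HZ as [? [? ?]].
        assert (0 <= 2 * E / (bb * k * (h / eta))) by (left; apply Rdiv_lt_0_compat; [lra| apply Rmult_lt_0_compat; [nra| lra]]).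
        pose proof (RRle_abs (- z0)). rewrite Rabs_Ropp in *. lra. }
      destruct (Ranalysis5.IVT_interv v 0 Y) as [y [Hy1 Hy2]]; auto.
      + intros x Hx. apply (deriv_cont v x (dv x)). apply Hvd. lra.
      + lra.
      + exists y. split; [lra| auto].
    - exists 0. split; [lra|]. rewrite Hv0. lra. }
  split.
  { destruct Hroot as [y [Hy Hv]]. rewrite (Heq y Hy), Hv.
    specialize (Hdvpos y Hy).
    assert (0 < / 2 * sigma ^ 2 * dv y) by (apply Rmult_lt_0_compat; [nra| auto]).
    assert (0 <= h * y) by nra. nra. }
  split.
  { split; [|split; [|split]].
    - intros y Hy. apply Hvd. lra.
    - apply right_quot. apply Hvd. lra.
    - intros y Hy. apply continuity_pt_filterlim. apply Hpsd_c. lra.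
    - eapply filterlim_filter_le_1; [apply filter_le_within|].
      apply continuity_pt_filterlim. apply Hpsd_c. lra. }
  split; [exact Heq|]. split; [exact Hv0|]. split; [exact Hmono| exact Hlim].
Qed.
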